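(* Let $M\in SL(N,\mathbb Z)$ be of type $\mathcal J_0$, with notation as in the context. Then the lattice $\mathcal L$ generated by $v_1,\dots,v_N$ is invariant under $g_0$, and the matrix of $g_0$ in the basis $(v_1,\dots,v_N)$ equals $M^\top$, i.e. $g_0(v_i)=\sum_{k}M_{ik}v_k$ for all $i$.
   Context: $M\in SL(N,\mathbb Z)$ is of type $\mathcal J_0$ if its characteristic polynomial has at least one real root, at least one non-real root, and all real roots simple. Let $\alpha_1,\dots,\alpha_s$ be the real eigenvalues, $N=s+2n$, and $a_1,\dots,a_s\in\mathbb R^N$ corresponding eigenvectors. Choose one eigenvalue in each complex-conjugate pair of non-real eigenvalues and let $W\subset\mathbb C^N$ be the sum of the generalized eigenspaces of $M$ for the chosen eigenvalues, so $\dim_{\mathbb C}W=n$. Fix a basis $b_1,\dots,b_n$ of $W$ and let $R$ be the matrix of the restriction of $M$ to $W$ in this basis. For $1\le i\le N$ put $v_i=(a_1^{(i)},\dots,a_s^{(i)},b_1^{(i)},\dots,b_n^{(i)})\in\mathbb R^s\times\mathbb C^n$, where $x^{(i)}$ is the $i$-th coordinate of $x$; $(v_1,\dots,v_N)$ is a basis of the real vector space $\mathbb R^s\times\mathbb C^n$. Define $g_0:\mathbb R^s\times\mathbb C^n\to\mathbb R^s\times\mathbb C^n$ by $g_0(w_1,\dots,w_s,z)=(\alpha_1w_1,\dots,\alpha_sw_s,R^\top z)$. *)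

(* Defs.v *)
From mathcomp Require Import all_boot all_algebra.
From mathcomp Require Import reals.
From mathcomp Require Import complex.
Set Implicit Arguments. Unset Strict Implicit. Unset Printing Implicit Defensive.
Import GRing.Theory Num.Theory.
Local Open Scope ring_scope.

Definition mxR (R : realType) (N : nat) (M : 'M[int]_N) : 'M[R]_N := map_mx intr M.
Definition mxC (R : realType) (N : nat) (M : 'M[int]_N) : 'M[R[i]]_N := map_mx intr M.

Definition typeJ0 (R : realType) (N : nat) (M : 'M[int]_N) : Prop :=
  [/\ exists x : R, root (char_poly (mxR R M)) x,
      exists z : R[i], root (char_poly (mxC R M)) z /\ 'Im z != 0
    & forall x : R, root (char_poly (mxR R M)) x ->
        ~~ (('X - x%:P) ^+ 2 %| char_poly (mxR R M))].

(* Membership in W = sum of generalized eigenspaces of M (acting on C^N,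
   column vectors) for the eigenvalues in the list Sel. *)
Definition inW (R : realType) (N : nat) (M : 'M[int]_N) (Sel : seq R[i])
    (w : 'cV[R[i]]_N) : Prop :=
  exists f : R[i] -> 'cV[R[i]]_N,
    (forall l, l \in Sel -> (mxC R M - l%:M) ^+ N *m f l = 0) /\
    w = \sum_(l <- Sel) f l.

(* The vectors v_i in R^s x C^n (as pairs of column vectors):
   v_i = (a_1^(i), ..., a_s^(i), b_1^(i), ..., b_n^(i)),
   where a_j is column j of A and b_l is column l of B. *)
Definition vvec (R : realType) (N s n : nat) (A : 'M[R]_(N, s)) (B : 'M[R[i]]_(N, n))
    (i : 'I_N) : 'cV[R]_s * 'cV[R[i]]_n :=
  (\col_j A i j, \col_l B i l).

Definition g0 (R : realType) (s n : nat) (alpha : 'I_s -> R) (Rm : 'M[R[i]]_n)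
    (x : 'cV[R]_s * 'cV[R[i]]_n) : 'cV[R]_s * 'cV[R[i]]_n :=
  (\col_j (alpha j * x.1 j 0), Rm^T *m x.2).

Definition inLattice (G : zmodType) (N : nat) (v : 'I_N -> G) (x : G) : Prop :=
  exists c : 'I_N -> int, x = \sum_(k < N) v k *~ c k.

(* Main.v *)
Require Import Defs.
From HB Require Import structures.
From mathcomp Require Import all_boot all_algebra.
From mathcomp Require Import reals.
From mathcomp Require Import complex.
Import GRing.Theory Num.Theory.
Local Open Scope ring_scope.

Section G0.
Variables (R : realType) (s n : nat) (alpha : 'I_s -> R) (Rm : 'M[R[i]]_n).
Lemma g0B : zmod_morphism (g0 alpha Rm).
Proof.
case=> a b [c d]; rewrite /g0 /=; congr pair.
  by apply/matrixP=> j k; rewrite !mxE mulrBr.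
by rewrite mulmxBr.
Qed.
HB.instance Definition _ := GRing.isZmodMorphism.Build _ _ (g0 alpha Rm) g0B.
End G0.
Section P.
Variables (U V : zmodType).
Lemma fst_sum I (r : seq I) P (F : I -> U * V) : (\sum_(i <- r | P i) F i).1 = \sum_(i <- r | P i) (F i).1.
Proof. by apply: (big_morph fst) => //. Qed.
Lemma snd_sum I (r : seq I) P (F : I -> U * V) : (\sum_(i <- r | P i) F i).2 = \sum_(i <- r | P i) (F i).2.
Proof. by apply: (big_morph snd) => //. Qed.
Lemma pairMn (x : U * V) m : x *+ m = (x.1 *+ m, x.2 *+ m).
Proof. case: x => a b; elim: m => [|m IH] //; by rewrite !mulrS IH. Qed.
Lemma pairMz (x : U * V) z : x *~ z = (x.1 *~ z, x.2 *~ z).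
Proof. by case: z => m; rewrite /intmul pairMn. Qed.
End P.
Theorem proposition3p6
  (R : realType) (N : nat) (M : 'M[int]_N)
  (hdet : \det M = 1) (hJ0 : typeJ0 R M)
  (s : nat) (alpha : 'I_s -> R) (halpha_inj : injective alpha)
  (halpha : forall x : R, root (char_poly (mxR R M)) x <-> exists j, alpha j = x)
  (A : 'M[R]_(N, s))
  (hA : forall j : 'I_s, col j A != 0 /\ mxR R M *m col j A = alpha j *: col j A)
  (n : nat) (hN : N = (s + 2 * n)%N)
  (Sel : seq R[i]) (hSel_uniq : uniq Sel)
  (hSel_root : forall z, z \in Sel -> root (char_poly (mxC R M)) z /\ 'Im z != 0)
  (hSel_choice : forall z, root (char_poly (mxC R M)) z -> 'Im z != 0 ->
                   (z \in Sel) = (z^* \notin Sel))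
  (B : 'M[R[i]]_(N, n))
  (hB_in : forall l : 'I_n, inW M Sel (col l B))
  (hB_free : \rank B = n)
  (hB_span : forall w, inW M Sel w -> exists c : 'cV[R[i]]_n, w = B *m c)
  (Rm : 'M[R[i]]_n) (hRm : mxC R M *m B = B *m Rm) :
  (forall y, inLattice (vvec A B) y <->
             exists x, inLattice (vvec A B) x /\ g0 alpha Rm x = y) /\
  (forall i : 'I_N, g0 alpha Rm (vvec A B i) = \sum_(k < N) vvec A B k *~ M i k).
Proof.
have P2 : forall i : 'I_N, g0 alpha Rm (vvec A B i) = \sum_(k < N) vvec A B k *~ M i k.
  move=> i; under eq_bigr do rewrite pairMz.
  rewrite [RHS]surjective_pairing fst_sum snd_sum /g0 /vvec /=; congr pair.
    apply/matrixP=> j t; rewrite !mxE summxE.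
    have := congr1 (fun m : 'cV[R]_N => m i 0) (proj2 (hA j)).
    rewrite !mxE => <-; apply: eq_bigr => k _; by rewrite -scaler_int !mxE.
  apply/matrixP=> l t; rewrite !mxE summxE.
  have := congr1 (fun m : 'M[R[i]]_(N,n) => m i l) hRm.
  rewrite !mxE => E.
  transitivity (\sum_j B i j * Rm j l).
    by apply: eq_bigr => k _; rewrite !mxE mulrC.
  rewrite -E; apply: eq_bigr => k _; by rewrite -scaler_int !mxE.
have G : forall c : 'I_N -> int, g0 alpha Rm (\sum_(k < N) vvec A B k *~ c k) =
   \sum_(j < N) vvec A B j *~ (\sum_(k < N) c k * M k j).
  move=> c; rewrite raddf_sum.
  under eq_bigr => k _ do rewrite raddfMz /= P2 mulrz_suml.
  rewrite exchange_big /=; apply: eq_bigr => j _.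
  rewrite mulrz_sumr; apply: eq_bigr => k _.
  by rewrite mulrzA_C.
split=> // y; split.
  case=> c ->.
  pose cr := \row_j c j; pose dr := cr *m \adj M.
  exists (\sum_(k < N) vvec A B k *~ dr 0 k); split; first by exists (fun k => dr 0 k).
  rewrite G; apply: eq_bigr => j _; congr (_ *~ _).
  have : dr *m M = cr by rewrite /dr -mulmxA mul_adj_mx hdet mulmx1.
  by move/(congr1 (fun m : 'rV[int]_N => m 0 j)); rewrite !mxE => <-.
case=> x [[c ->] <-]; rewrite G; by eexists.
Qed.
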